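(* Let $X$ be a set and $\sqsubseteq$ a binary relation on pairs of finite subsets of $X$ satisfying: ($\iota_0$) $\emptyset\not\sqsubseteq\emptyset$; ($\iota_1$) $a\sqsubseteq b$, $a\subseteq a'$, $b\subseteq b'$ imply $a'\sqsubseteq b'$; ($\iota_2$) $\{p\}\sqsubseteq\{q\}$ and $\{q\}\sqsubseteq\{p\}$ hold iff $p=q$; ($\iota_3$) $(a_0\cup\{p\})\sqsubseteq b_0$ and $a_1\sqsubseteq(b_1\cup\{p\})$ imply $(a_0\cup a_1)\sqsubseteq(b_0\cup b_1)$. Regard $\mathbf{X}=(X,\sqsubseteq)$ as a structure in the language $\{I_{n,m}\}_{n,m\in\mathbb N}$ by letting $I_{n,m}(s_0,\dots,s_{n-1},t_0,\dots,t_{m-1})$ hold iff $\{s_0,\dots,s_{n-1}\}\sqsubseteq\{t_0,\dots,t_{m-1}\}$. Then $\mathbf{X}$ is $\mathbf{I}$-separated.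
   Context: $\mathbf{I}$ is the structure with universe $\{0,1\}$ and, for all $n,m\in\mathbb N$ (including $0$), an $(n+m)$-ary relation $I_{n,m}$ given by $I_{n,m}(a_0,\dots,a_{n-1},b_0,\dots,b_{m-1})\iff \min_{i<n}a_i\le\max_{j<m}b_j$, with $\min\emptyset=1$, $\max\emptyset=0$. A structure is $\mathbf{I}$-separated if it embeds (injective homomorphism preserving and reflecting all relations) into some power of $\mathbf{I}$. *)

(* Defs.v *)
From Stdlib Require Import List.
Import ListNotations.

Definition finite_subset {X : Type} (A : X -> Prop) : Prop :=
  exists l : list X, forall x, A x <-> In x l.

Definition subset {X : Type} (A B : X -> Prop) : Prop := forall x, A x -> B x.
Definition emptyset {X : Type} : X -> Prop := fun _ => False.
Definition singleton {X : Type} (p : X) : X -> Prop := fun x => x = p.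
Definition union {X : Type} (A B : X -> Prop) : X -> Prop := fun x => A x \/ B x.

Definition set_of_list {X : Type} (s : list X) : X -> Prop := fun x => In x s.

Definition iota_axioms {X : Type} (R : (X -> Prop) -> (X -> Prop) -> Prop) : Prop :=
  ~ R emptyset emptyset /\
  (forall a b a' b', finite_subset a -> finite_subset b ->
     finite_subset a' -> finite_subset b' ->
     R a b -> subset a a' -> subset b b' -> R a' b') /\
  (forall p q : X, (R (singleton p) (singleton q) /\ R (singleton q) (singleton p)) <-> p = q) /\
  (forall a0 b0 a1 b1 (p : X), finite_subset a0 -> finite_subset b0 ->
     finite_subset a1 -> finite_subset b1 ->
     R (union a0 (singleton p)) b0 -> R a1 (union b1 (singleton p)) ->
     R (union a0 a1) (union b0 b1)).

(* The relation I_{n,m} of the structure I on {0,1} = bool: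
   min_i a_i <= max_j b_j, with min [] = 1, max [] = 0;
   i.e. (all a_i = 1) -> (some b_j = 1).  Tuples of length n, m are lists. *)
Definition I_rel (a b : list bool) : Prop :=
  (forall x, In x a -> x = true) -> exists y, In y b /\ y = true.

Definition X_rel {X : Type} (R : (X -> Prop) -> (X -> Prop) -> Prop) (s t : list X) : Prop :=
  R (set_of_list s) (set_of_list t).

(* X embeds into the power I^K: f injective, and for every n, m and tuples
   s, t, I_{n,m}^X(s,t) iff I_{n,m} holds in every coordinate k of I^K. *)
Definition I_separated {X : Type} (rel : list X -> list X -> Prop) : Prop :=
  exists (K : Type) (f : X -> K -> bool),
    (forall x y, (forall k, f x k = f y k) -> x = y) /\
    (forall s t : list X,
       rel s t <-> forall k : K, I_rel (map (fun x => f x k) s) (map (fun y => f y k) t)).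

(* Main.v *)
Require Import Defs.
From Stdlib Require Import List Classical ClassicalEpsilon.
From mathcomp Require classical_sets.
Import ListNotations.

Definition consistent {X : Type} (R : (X -> Prop) -> (X -> Prop) -> Prop)
  (S : bool * X -> Prop) : Prop :=
  forall a b : list X, (forall x, In x a -> S (true, x)) ->
    (forall x, In x b -> S (false, x)) -> ~ R (set_of_list a) (set_of_list b).

Lemma fin_sol {X : Type} (l : list X) : finite_subset (set_of_list l).
Proof. exists l; unfold set_of_list; tauto. Qed.

Lemma transfer {X : Type} (R : (X -> Prop) -> (X -> Prop) -> Prop) :
  iota_axioms R -> forall a b a' b', finite_subset a -> finite_subset b ->
  finite_subset a' -> finite_subset b' -> R a b ->
  (forall x, a x -> a' x) -> (forall x, b x -> b' x) -> R a' b'.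
Proof.
  intros (_ & H1 & _) a b a' b' fa fb fa' fb' Hab sa sb.
  exact (H1 a b a' b' fa fb fa' fb' Hab sa sb).
Qed.

Lemma chain_cover {X : Type} (F : (bool * X -> Prop) -> Prop)
  (S0 : bool * X -> Prop) :
  classical_sets.total_on F classical_sets.subset ->
  forall l, (forall y, In y l -> (exists2 S, F S & S y) \/ S0 y) ->
  exists S, (F S \/ forall y, ~ S y) /\ forall y, In y l -> S y \/ S0 y.
Proof.
  intros tot l. induction l as [|z l IH]; intros Hl.
  - exists (fun _ => False). split; [right; auto|]. intros y [].
  - destruct IH as [S [PS HS]].
    { intros y Hy; apply Hl; right; exact Hy. }
    destruct (Hl z (or_introl eq_refl)) as [[S' FS' S'z]|H0].
    + destruct PS as [FS|eS].
      * destruct (tot S S' FS FS') as [sub|sub].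
        -- exists S'. split; [left; exact FS'|].
           intros y [<-|Hy]; [left; exact S'z|].
           destruct (HS y Hy) as [h|h]; [left; apply sub; exact h|right; exact h].
        -- exists S. split; [left; exact FS|].
           intros y [<-|Hy]; [left; apply sub; exact S'z|].
           exact (HS y Hy).
      * exists S'. split; [left; exact FS'|].
        intros y [<-|Hy]; [left; exact S'z|].
        destruct (HS y Hy) as [h|h]; [destruct (eS y h)|right; exact h].
    + exists S. split; [exact PS|]. intros y [<-|Hy]; [right; exact H0|exact (HS y Hy)].
Qed.

Lemma consistent_mono {X : Type} (R : (X -> Prop) -> (X -> Prop) -> Prop) S S' :
  consistent R S -> (forall y, S' y -> S y) -> consistent R S'.
Proof.
  intros C sub a b Ha Hb. apply C; intros x Hx; apply sub; auto.
Qed.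

Lemma maximal {X : Type} (R : (X -> Prop) -> (X -> Prop) -> Prop) S0 :
  consistent R S0 ->
  exists M, consistent R M /\ (forall y, S0 y -> M y) /\
    (forall y, consistent R (fun z => M z \/ z = y) -> M y).
Proof.
  intros C0.
  destruct (@classical_sets.Zorn_bigcup (bool * X)
    (fun S : bool * X -> Prop => consistent R (fun y => S y \/ S0 y))) as [A [PA maxA]].
  - intros F FP tot a b Ha Hb HR.
    destruct (chain_cover F S0 tot (map (pair true) a ++ map (pair false) b))
      as [S [FS HS]].
    { intros y Hy. apply in_app_or in Hy. destruct Hy as [Hy|Hy];
      apply in_map_iff in Hy; destruct Hy as [x [<- Hx]]; [exact (Ha x Hx)|exact (Hb x Hx)]. }
    assert (Ha' : forall x, In x a -> S (true, x) \/ S0 (true, x)).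
    { intros x Hx; apply HS; apply in_or_app; left; apply in_map; exact Hx. }
    assert (Hb' : forall x, In x b -> S (false, x) \/ S0 (false, x)).
    { intros x Hx; apply HS; apply in_or_app; right; apply in_map; exact Hx. }
    destruct FS as [FS|eS].
    + exact (FP S FS a b Ha' Hb' HR).
    + apply (C0 a b); auto.
      * intros x Hx; destruct (Ha' x Hx) as [h|h]; [destruct (eS _ h)|exact h].
      * intros x Hx; destruct (Hb' x Hx) as [h|h]; [destruct (eS _ h)|exact h].
  - exists (fun y => A y \/ S0 y). split; [exact PA|]. split; [auto|].
    intros y Cy. apply NNPP; intros nM.
    apply (maxA (fun z => A z \/ z = y)).
    + split.
      * intros z Hz; left; exact Hz.
      * intros sub. apply nM; left; apply sub; right; reflexivity.
    + apply (consistent_mono R _ _ Cy). intros z [[h|h]|h]; auto.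
Qed.

Lemma remove_list {X : Type} (l : list X) (x : X) :
  exists l', forall z, In z l' <-> In z l /\ z <> x.
Proof.
  induction l as [|w l [l' Hl']].
  - exists []. simpl; tauto.
  - destruct (classic (w = x)) as [e|ne].
    + exists l'. intros z. rewrite Hl'. simpl. split.
      * tauto.
      * intros [[<-|h] h2]; [contradiction|tauto].
    + exists (w :: l'). intros z. simpl. rewrite Hl'. split.
      * intros [<-|h]; tauto.
      * intros [[<-|h] h2]; tauto.
Qed.

Lemma not_consistent {X : Type} (R : (X -> Prop) -> (X -> Prop) -> Prop) S :
  ~ consistent R S -> exists a b, (forall x, In x a -> S (true, x)) /\
    (forall x, In x b -> S (false, x)) /\ R (set_of_list a) (set_of_list b).
Proof.
  intros nC. apply NNPP; intro H. apply nC. intros a b Ha Hb HR.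
  apply H. exists a, b. auto.
Qed.

Lemma fin_union {X : Type} (l1 l2 : list X) :
  finite_subset (union (set_of_list l1) (set_of_list l2)).
Proof.
  exists (l1 ++ l2). intros x. unfold union, set_of_list. rewrite in_app_iff. tauto.
Qed.

Lemma fin_single {X : Type} (x : X) : finite_subset (singleton x).
Proof. exists [x]. unfold singleton. simpl. intuition. Qed.

Lemma fin_union1 {X : Type} (l : list X) x :
  finite_subset (union (set_of_list l) (singleton x)).
Proof.
  exists (l ++ [x]). intros z. unfold union, set_of_list, singleton.
  rewrite in_app_iff. simpl. intuition.
Qed.

Definition hom {X : Type} (R : (X -> Prop) -> (X -> Prop) -> Prop) (g : X -> bool) :=
  forall s t, X_rel R s t -> I_rel (map g s) (map g t).

Lemma sep {X : Type} (R : (X -> Prop) -> (X -> Prop) -> Prop) :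
  iota_axioms R -> forall s t, ~ R (set_of_list s) (set_of_list t) ->
  exists g, hom R g /\ (forall x, In x s -> g x = true) /\
    (forall x, In x t -> g x = false).
Proof.
  intros HR s t nR.
  pose (S0 := fun y : bool * X => let (bb, x) := y in if bb then In x s else In x t).
  assert (C0 : consistent R S0).
  { intros a b Ha Hb Hab. apply nR.
    apply (transfer R HR _ _ _ _ (fin_sol a) (fin_sol b) (fin_sol s) (fin_sol t) Hab).
    - intros x Hx; exact (Ha x Hx).
    - intros x Hx; exact (Hb x Hx). }
  destruct (maximal R S0 C0) as [M [CM [S0M maxM]]].
  assert (disj : forall x, M (true, x) -> M (false, x) -> False).
  { intros x h1 h2. pose proof HR as (_ & _ & H2 & _).
    assert (Rxx : R (singleton x) (singleton x)) by (apply H2; reflexivity).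
    apply (CM [x] [x]).
    - intros z [<-|[]]; exact h1.
    - intros z [<-|[]]; exact h2.
    - apply (transfer R HR _ _ _ _ (fin_single x) (fin_single x) (fin_sol [x]) (fin_sol [x]) Rxx);
      intros z ->; left; reflexivity. }
  assert (tot : forall x, M (true, x) \/ M (false, x)).
  { intros x. apply NNPP; intros nn.
    assert (n1 : ~ M (true, x)) by tauto.
    assert (n2 : ~ M (false, x)) by tauto.
    assert (nc1 : ~ consistent R (fun z => M z \/ z = (true, x))) by (intro c; apply n1; apply maxM; exact c).
    assert (nc2 : ~ consistent R (fun z => M z \/ z = (false, x))) by (intro c; apply n2; apply maxM; exact c).
    destruct (not_consistent R _ nc1) as [a [b [Ha [Hb Hab]]]].
    destruct (not_consistent R _ nc2) as [a' [b' [Ha' [Hb' Hab']]]].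
    destruct (remove_list a x) as [la0 Hla0].
    destruct (remove_list b' x) as [lb1 Hlb1].
    pose proof HR as (H0 & H1 & H2 & H3).
    assert (R1 : R (union (set_of_list la0) (singleton x)) (set_of_list b)).
    { apply (transfer R (conj H0 (conj H1 (conj H2 H3))) _ _ _ _ (fin_sol a) (fin_sol b)
        (fin_union1 la0 x) (fin_sol b) Hab).
      - intros z Hz. unfold union, singleton, set_of_list.
        destruct (classic (z = x)) as [e|ne]; [right; exact e|left; apply Hla0; auto].
      - auto. }
    assert (R2 : R (set_of_list a') (union (set_of_list lb1) (singleton x))).
    { apply (transfer R (conj H0 (conj H1 (conj H2 H3))) _ _ _ _ (fin_sol a') (fin_sol b')
        (fin_sol a') (fin_union1 lb1 x) Hab').
      - auto.
      - intros z Hz. unfold union, singleton, set_of_list.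
        destruct (classic (z = x)) as [e|ne]; [right; exact e|left; apply Hlb1; auto]. }
    pose proof (H3 _ _ _ _ x (fin_sol la0) (fin_sol b) (fin_sol a') (fin_sol lb1) R1 R2) as R3.
    apply (CM (la0 ++ a') (b ++ lb1)).
    - intros z Hz. apply in_app_or in Hz. destruct Hz as [Hz|Hz].
      + apply Hla0 in Hz. destruct Hz as [Hz nz].
        destruct (Ha z Hz) as [h|h]; [exact h|].
        injection h; intros; contradiction.
      + destruct (Ha' z Hz) as [h|h]; [exact h|discriminate].
    - intros z Hz. apply in_app_or in Hz. destruct Hz as [Hz|Hz].
      + destruct (Hb z Hz) as [h|h]; [exact h|discriminate].
      + apply Hlb1 in Hz. destruct Hz as [Hz nz].
        destruct (Hb' z Hz) as [h|h]; [exact h|].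
        injection h; intros; contradiction.
    - apply (H1 _ _ _ _ (fin_union la0 a') (fin_union b lb1) (fin_sol _) (fin_sol _) R3);
        intros z; unfold union, set_of_list; rewrite in_app_iff; tauto. }
  pose (g := fun x => if excluded_middle_informative (M (true, x)) then true else false).
  assert (gT : forall x, g x = true <-> M (true, x)).
  { intros x. unfold g. destruct (excluded_middle_informative (M (true, x))); split;
      intros h; auto; try discriminate; contradiction. }
  exists g. split; [|split].
  - intros s' t' HR' Hall. apply NNPP; intros nex.
    apply (CM s' t').
    + intros x Hx. apply gT. apply Hall. apply in_map; exact Hx.
    + intros x Hx. destruct (tot x) as [h|h]; [|exact h].
      exfalso; apply nex. exists (g x). split; [apply in_map; exact Hx|apply gT; exact h].
    + exact HR'.
  - intros x Hx. apply gT. apply S0M. exact Hx.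
  - intros x Hx. destruct (g x) eqn:E; [|reflexivity].
    exfalso. apply gT in E. apply (disj x E). apply S0M. exact Hx.
Qed.

Theorem mainTheorem7 (X : Type) (R : (X -> Prop) -> (X -> Prop) -> Prop) :
  iota_axioms R -> I_separated (X_rel R).
Proof.
  intros HR.
  exists {g : X -> bool | hom R g}, (fun x k => proj1_sig k x).
  split.
  - intros x y Hxy. apply NNPP; intros ne.
    pose proof HR as (_ & _ & H2 & _).
    assert (nb : ~ (R (singleton x) (singleton y) /\ R (singleton y) (singleton x)))
      by (rewrite H2; exact ne).
    assert (key : forall u v, ~ R (singleton u) (singleton v) ->
       (forall k : {g : X -> bool | hom R g}, proj1_sig k u = proj1_sig k v) -> False).
    { intros u v nuv Huv.
      assert (n' : ~ R (set_of_list [u]) (set_of_list [v])).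
      { intro h. apply nuv.
        apply (transfer R HR _ _ _ _ (fin_sol [u]) (fin_sol [v]) (fin_single u) (fin_single v) h);
          intros z [<-|[]]; reflexivity. }
      destruct (sep R HR [u] [v] n') as [g [hg [gu gv]]].
      specialize (Huv (exist _ g hg)). simpl in Huv.
      rewrite (gu u (or_introl eq_refl)), (gv v (or_introl eq_refl)) in Huv. discriminate. }
    apply (not_and_or _ _) in nb. destruct nb as [nb|nb].
    + exact (key x y nb Hxy).
    + apply (key y x nb). intros k; symmetry; apply Hxy.
  - intros s t. split.
    + intros H [g hg]. simpl. apply hg. exact H.
    + intros H. apply NNPP; intros nR.
      destruct (sep R HR s t nR) as [g [hg [gs gt]]].
      specialize (H (exist _ g hg)). simpl in H.
      destruct H as [y [Hy ey]].
      * intros b Hb. apply in_map_iff in Hb. destruct Hb as [x [<- Hx]]. apply gs; exact Hx.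
      * apply in_map_iff in Hy. destruct Hy as [x [<- Hx]].
        rewrite (gt x Hx) in ey. discriminate.
Qed.
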